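(* Let $j,k_G,k_H$ be positive integers with $j\le k_G\le k_H$, let $G$ be a $(j,k_G)$-biclique and $H$ a $(j,k_H)$-biclique, with $P_G(x)=(x)_{k_G}g(x)$ and $P_H(x)=(x)_{k_H}h(x)$. Let $c$ be an integer. Then $g(x)=(-1)^j h(-x+c)$ if and only if, for all $0\le i\le j$, $$m_{\bar G}^i=\sum_{l=0}^{i}(-1)^l\, m_{\bar H}^l\binom{j-l}{j-i}\,(k_G+k_H+j-c-l-1)_{i-l}.$$
   Context: All graphs are finite and simple. For integers $1\le j\le k$, a $(j,k)$-biclique is a graph whose vertex set is the disjoint union of a $j$-clique and a $k$-clique, with an arbitrary set of additional edges each joining a vertex of the $j$-clique to a vertex of the $k$-clique; $\bar G$ denotes the complement of $G$. $P_G(x)$ is the chromatic polynomial, and $(x)_n=x(x-1)\cdots(x-n+1)$ the falling factorial ($(x)_0=1$). For a $(j,k)$-biclique $G$, $(x)_k$ divides $P_G(x)$ and $g(x)=P_G(x)/(x)_k$ is a polynomial of degree $j$ (the interesting factor). $m_F^i$ denotes the number of matchings with $i$ edges in a graph $F$. *)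

(* Defs.v *)
From HB Require Import structures.
From mathcomp Require Import all_boot all_order all_algebra.
Set Implicit Arguments. Unset Strict Implicit. Unset Printing Implicit Defensive.
Import Order.TTheory GRing.Theory Num.Theory.
Local Open Scope ring_scope.

(* A finite simple graph is a symmetric irreflexive relation e on a finType. *)

Definition compl_rel (V : finType) (e : rel V) : rel V :=
  fun x y => (x != y) && ~~ e x y.

Definition is_edge (V : finType) (e : rel V) (E : {set V}) : bool :=
  [exists x, exists y, (e x y) && (E == [set x; y])].

Definition is_matching (V : finType) (e : rel V) (M : {set {set V}}) : bool :=
  [forall E in M, is_edge e E] &&
  [forall E1 in M, forall E2 in M, (E1 != E2) ==> [disjoint E1 & E2]].

Definition nmatch (V : finType) (e : rel V) (i : nat) : nat :=
  #|[set M : {set {set V}} | is_matching e M & #|M| == i]|.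

Definition ncol (V : finType) (e : rel V) (n : nat) : nat :=
  #|[set f : {ffun V -> 'I_n} | [forall x, forall y, e x y ==> (f x != f y)]]|.

Definition is_chromatic_poly (V : finType) (e : rel V) (p : {poly int}) : Prop :=
  forall n : nat, p.[n%:R] = (ncol e n)%:R.

Definition falling (n : nat) : {poly int} := \prod_(i < n) ('X - (i%:R)%:P).

Definition biclique (j k : nat) (B : 'I_j -> 'I_k -> bool) : rel ('I_j + 'I_k)%type :=
  fun x y => match x, y with
  | inl a, inl b => a != b
  | inr a, inr b => a != b
  | inl a, inr b => B a b
  | inr b, inl a => B a b
  end.

(* Main.v *)
Require Import Defs.
From HB Require Import structures.
From mathcomp Require Import all_boot all_order all_algebra.
Import Order.TTheory GRing.Theory Num.Theory.
Local Open Scope ring_scope.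

Set Implicit Arguments. Unset Strict Implicit. Unset Printing Implicit Defensive.
Local Close Scope ring_scope.

Lemma disjP (T : finType) (A B : {set T}) : (forall x, x \in A -> x \in B -> False) -> [disjoint A & B].
Proof. by move=> H; apply/pred0P => x /=; apply/negP => /andP[] /H. Qed.
Lemma set2_inv (T : finType) (u v x y : T) : u != v -> [set u; v] = [set x; y] ->
   (x = u /\ y = v) \/ (x = v /\ y = u).
Proof.
move=> ne E.
have hx : x \in [set u; v] by rewrite E !inE eqxx.
have hy : y \in [set u; v] by rewrite E !inE eqxx orbT.
have hu : u \in [set x; y] by rewrite -E !inE eqxx.
have hv : v \in [set x; y] by rewrite -E !inE eqxx orbT.
move: hx hy hu hv; rewrite !inE.
case/orP=> /eqP ->; case/orP=> /eqP ->; rewrite ?eqxx ?orbb; auto.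
- by move=> _ /eqP E'; move: ne; rewrite E' eqxx.
- by move=> /eqP E' _; move: ne; rewrite E' eqxx.
Qed.

Section Comb.
Variables (j k : nat) (B : 'I_j -> 'I_k -> bool).
Local Notation V := ('I_j + 'I_k)%type.
Local Notation e := (biclique B).

Definition okp (p : {ffun 'I_j -> option 'I_k}) : bool :=
  [forall a, forall a', (p a != None) ==> (p a == p a') ==> (a == a')] &&
  [forall a, forall b, (p a == Some b) ==> ~~ B a b].
Definition szp (p : {ffun 'I_j -> option 'I_k}) := #|[set a | p a != None]|.

Lemma okp_inj p a a' b : okp p -> p a = Some b -> p a' = Some b -> a = a'.
Proof.
case/andP=> /forallP H _ Ha Ha'; apply/eqP.
by move: (forallP (H a) a'); rewrite Ha Ha' eqxx.
Qed.

Lemma okp_B p a b : okp p -> p a = Some b -> ~~ B a b.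
Proof. by case/andP=> _ /forallP H Ha; move: (forallP (H a) b); rewrite Ha eqxx. Qed.

Lemma okpP (p : {ffun 'I_j -> option 'I_k}) : (forall a a' b, p a = Some b -> p a' = Some b -> a = a') ->
  (forall a b, p a = Some b -> ~~ B a b) -> okp p.
Proof.
move=> H1 H2; apply/andP; split; apply/forallP=> a; apply/forallP=> a'.
  case E: (p a) => [b|] //=; apply/implyP=> /eqP E'.
  by apply/eqP; apply: (H1 a a' b) => //; rewrite -E'.
by apply/implyP=> /eqP; apply: H2.
Qed.

Section Col.
Variable n : nat.
Definition proper (f : {ffun V -> 'I_n}) := [forall x, forall y, e x y ==> (f x != f y)].

Lemma properP f : proper f -> forall x y, e x y -> f x != f y.
Proof. by move=> /forallP H x y exy; move: (forallP (H x) y); rewrite exy. Qed.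

Definition pf (f : {ffun V -> 'I_n}) : {ffun 'I_j -> option 'I_k} :=
  [ffun a => [pick b | f (inr b) == f (inl a)]].

Lemma pf_some f a b : proper f -> (pf f a == Some b) = (f (inr b) == f (inl a)).
Proof.
move=> Pf; rewrite ffunE; case: pickP => [b' /eqP Hb'|H].
  apply/idP/idP => [/eqP[<-]|/eqP Hb]; first by rewrite Hb'.
  case: (eqVneq b' b) => [->//|ne].
  by move: (properP Pf (x:=inr b') (y:= inr b)); rewrite /= ne Hb Hb' eqxx => /(_ isT).
by rewrite H.
Qed.

Lemma okp_pf f : proper f -> okp (pf f).
Proof.
move=> Pf; apply: okpP => [a a' b|a b].
  move=> /eqP; rewrite pf_some // => /eqP H1 /eqP; rewrite pf_some // => /eqP H2.
  case: (eqVneq a a') => // ne.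
  by move: (properP Pf (x:=inl a) (y:= inl a')); rewrite /= ne -H1 -H2 eqxx => /(_ isT).
move=> /eqP; rewrite pf_some // => /eqP H; apply/negP => Bab.
by move: (properP Pf (x:=inl a) (y:= inr b)); rewrite /= Bab H eqxx => /(_ isT).
Qed.

Section Fix.
Variable p : {ffun 'I_j -> option 'I_k}.
Definition Wp (x : V) : bool := if x is inl a then p a == None else true.
Definition W := {x : V | Wp x}.
Definition wr (b : 'I_k) : W := @exist V Wp (inr b) (erefl true).

Definition projW (x : V) : W :=
  match x with
  | inr b => wr b
  | inl a => match p a as o return (p a = o -> W) with
             | Some b => fun _ => wr b
             | None => fun H => @exist V Wp (inl a) (introT eqP H)
             end (erefl (p a))
  end.

Lemma projW_val x : val (projW x) =
  match x with inl a => if p a is Some b then inr b else inl a | inr b => inr b end.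
Proof.
case: x => [a|b] //=.
move: (erefl (p a)); case: {2 3}(p a) => //.
  by move=> b ->.
by move=> E /=; rewrite E.
Qed.

Lemma projW_id (w : W) : projW (val w) = w.
Proof.
apply: val_inj; rewrite projW_val; case: w => [[a|b] /= H] //.
by move/eqP: H => ->.
Qed.

Lemma card_W : #|{: W}| = (k + (j - szp p))%N.
Proof.
rewrite card_sig -sum1_card big_sumType /= addnC.
rewrite !sum1_card card_ord; congr (_ + _)%N.
rewrite /szp.
have -> : #|[set a | p a != None]| = #|[predC [pred a | p a == None]]|.
  by apply: eq_card => a; rewrite !inE.
rewrite -[X in X - _](card_ord j) -(cardC [pred a | p a == None]) addnK.
by apply: eq_card => a; rewrite !inE.
Qed.


Definition res (f : {ffun V -> 'I_n}) : {ffun W -> 'I_n} := [ffun w => f (val w)].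
Definition ext (g : {ffun W -> 'I_n}) : {ffun V -> 'I_n} := [ffun x => g (projW x)].

Lemma res_ext g : res (ext g) = g.
Proof. by apply/ffunP => w; rewrite !ffunE projW_id. Qed.

Lemma ext_res f : proper f -> pf f = p -> ext (res f) = f.
Proof.
move=> Pf Hp; apply/ffunP => x; rewrite !ffunE projW_val.
case: x => [a|b] //; case E: (p a) => [b|] //.
by apply/eqP; rewrite -pf_some // Hp E.
Qed.

Lemma res_inj f : proper f -> pf f = p -> injectiveb (res f).
Proof.
move=> Pf Hp; apply/injectiveP => [[x1 H1] [x2 H2]]; rewrite !ffunE /= => Ef.
apply: val_inj => /=; case: (eqVneq x1 x2) => // ne.
have Hne : forall x y, e x y -> f x = f y -> False.
  by move=> x y exy Exy; move: (properP Pf exy); rewrite Exy eqxx.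
case: x1 x2 H1 H2 ne Ef => [a1|b1] [a2|b2] /= H1 H2 ne Ef.
- by case: (Hne (inl a1) (inl a2)) => //=; apply: contraNneq ne => ->.
- case: (Hne (inl a1) (inr b2)) => //=; apply/negPn/negP => Bab.
  by move: H1; rewrite -Hp; have := pf_some a1 b2 Pf; rewrite Ef eqxx => /eqP ->.
- case: (Hne (inl a2) (inr b1)) => //=; apply/negPn/negP => Bab.
  by move: H2; rewrite -Hp; have := pf_some a2 b1 Pf; rewrite Ef eqxx => /eqP ->.
- by case: (Hne (inr b1) (inr b2)) => //=; apply: contraNneq ne => ->.
Qed.

Lemma ext_proper (g : {ffun W -> 'I_n}) : okp p -> injectiveb g -> proper (ext g) && (pf (ext g) == p).
Proof.
move=> Op /injectiveP Ig.
have key : forall x y, val (projW x) != val (projW y) -> ext g x != ext g y.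
  move=> x y; rewrite !ffunE; apply: contraNneq => /Ig -> //.
apply/andP; split.
  apply/forallP => x; apply/forallP => y; apply/implyP => exy; apply: key.
  rewrite !projW_val.
  case: x y exy => [a|b] [a'|b'] /= exy.
  - case E: (p a) => [c|]; case E': (p a') => [c'|] //.
      by apply: contraNneq exy => [[Ec]]; subst c'; rewrite (okp_inj Op E E') eqxx.
  - case E: (p a) => [c|] //; apply/negP => /eqP [Ec]; subst c; by move: (okp_B Op E); rewrite exy.
  - case E: (p a') => [c|] //; apply/negP => /eqP [Ec]; subst c; by move: (okp_B Op E); rewrite exy.
  - by apply: contraNneq exy => [[->]]; rewrite eqxx.
apply/eqP/ffunP => a; rewrite ffunE.
have Hb : forall b, (ext g (inr b) == ext g (inl a)) = (inr b == val (projW (inl a))).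
  move=> b; rewrite !ffunE; apply/idP/idP => [/eqP/Ig E|/eqP H].
    by rewrite -E.
  by apply/eqP; congr (g _); apply: val_inj; rewrite -H.
case: pickP => [b|] /=.
  rewrite Hb projW_val; case: (p a) => [c|] // /eqP [->] //.
case E: (p a) => [c|] // /(_ c); rewrite Hb projW_val E eqxx //.
Qed.

Lemma card_fib : okp p ->
  #|[set f | proper f & pf f == p]| = n ^_ (k + (j - szp p)).
Proof.
move=> Op.
rewrite -card_W -[n in n ^_ _](card_ord n) -card_inj_ffuns.
rewrite -(card_in_imset (f := res)).
  apply: eq_card => g; rewrite [in RHS]inE; apply/imsetP/idP => [[f]|Ig].
    by rewrite inE => /andP[Pf /eqP Hp] ->; apply: res_inj.
  by exists (ext g); rewrite ?inE ?ext_proper ?res_ext.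
move=> f1 f2; rewrite !inE => /andP[P1 /eqP H1] /andP[P2 /eqP H2] E.
by rewrite -(ext_res P1 H1) -(ext_res P2 H2) E.
Qed.
End Fix.

Lemma szp_le p : (szp p <= j)%N.
Proof. by rewrite /szp -[j in (_ <= j)%N](card_ord j) max_card. Qed.

Definition PI (i : nat) := #|[set p | okp p & szp p == i]|.

Lemma ncol_eq : ncol (biclique B) n = (\sum_(i < j.+1) PI i * n ^_ (j + k - i))%N.
Proof.
have -> : ncol (biclique B) n = #|[set f | proper f]| by [].
rewrite -sum1_card (partition_big (@pf) okp) /=; last by move=> f; rewrite inE; apply: okp_pf.
transitivity (\sum_(p | okp p) n ^_ (j + k - szp p))%N.
  apply: eq_bigr => p Op; rewrite [(j + k)%N]addnC -addnBA ?szp_le //.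
  rewrite -(card_fib Op) -sum1_card; apply: eq_bigl => f; by rewrite !inE.
rewrite (partition_big (fun p => (inord (szp p) : 'I_j.+1)) xpredT) //=.
apply: eq_bigr => i _.
transitivity (\sum_(p in [set p | okp p & szp p == i]) n ^_ (j + k - i))%N.
  apply: eq_big => p.
    rewrite inE; congr (_ && _); apply/eqP/eqP => [<-|E].
      by rewrite inordK // ltnS szp_le.
    by apply: val_inj; rewrite /= inordK // ltnS szp_le.
  by case/andP=> _ /eqP <-; rewrite inordK // ltnS szp_le.
by rewrite sum_nat_const.
Qed.
End Col.

Local Notation ce := (compl_rel (biclique B)).

Lemma ce_lr a b : ce (inl a) (inr b) = ~~ B a b. Proof. by []. Qed.
Lemma ce_rl a b : ce (inr b) (inl a) = ~~ B a b. Proof. by []. Qed.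
Lemma ce_ll a a' : ce (inl a) (inl a') = false.
Proof. by rewrite /compl_rel /=; case: (eqVneq a a') => [->|->]; rewrite ?eqxx ?andbF. Qed.
Lemma ce_rr b b' : ce (inr b) (inr b') = false.
Proof. by rewrite /compl_rel /=; case: (eqVneq b b') => [->|->]; rewrite ?eqxx ?andbF. Qed.

Lemma edgeP E : is_edge ce E -> exists a b, ~~ B a b /\ E = [set inl a; inr b].
Proof.
case/existsP => x /existsP [y /andP [cxy /eqP ->]].
case: x y cxy => [a|b] [a'|b'] //; rewrite ?ce_ll ?ce_rr ?ce_lr ?ce_rl // => H.
  by exists a, b'.
by exists a', b; rewrite setUC.
Qed.

Lemma edge_lr a b : ~~ B a b -> is_edge ce [set inl a; inr b].
Proof. by move=> H; apply/existsP; exists (inl a); apply/existsP; exists (inr b); rewrite ce_lr H eqxx. Qed.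

Lemma match_share M E1 E2 x : is_matching ce M -> E1 \in M -> E2 \in M ->
  x \in E1 -> x \in E2 -> E1 = E2.
Proof.
case/andP=> _ /forallP H h1 h2 x1 x2; apply/eqP; apply/negPn/negP => ne.
move: (H E1); rewrite h1 /= => /forallP/(_ E2); rewrite h2 ne /= => dis.
by move: (disjointFr dis x1); rewrite x2.
Qed.

Definition ME (p : {ffun 'I_j -> option 'I_k}) : {set {set V}} :=
  [set E | [exists a, exists b, (p a == Some b) && (E == [set inl a; inr b])]].

Lemma inME (p : {ffun 'I_j -> option 'I_k}) E : reflect (exists a b, p a = Some b /\ E = [set inl a; inr b]) (E \in ME p).
Proof.
rewrite inE; apply: (iffP existsP) => [[a /existsP [b /andP [/eqP h /eqP h']]]|[a [b [h h']]]].
  by exists a, b.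
by exists a; apply/existsP; exists b; rewrite h h' !eqxx.
Qed.

Lemma lr_neq a b : inl a != inr b :> V. Proof. by []. Qed.
Lemma inlI a a' : inl a = inl a' :> V -> a = a'. Proof. by case. Qed.
Lemma inrI b b' : inr b = inr b' :> V -> b = b'. Proof. by case. Qed.
Lemma lrF a b : inl a = inr b :> V -> False. Proof. by []. Qed.

Lemma ME_matching (p : {ffun 'I_j -> option 'I_k}) : okp p -> is_matching ce (ME p).
Proof.
move=> Op; apply/andP; split.
  by apply/forallP => E; apply/implyP => /inME [a [b [h ->]]]; apply: edge_lr; apply: okp_B h.
apply/forallP => E1; apply/implyP => /inME [a1 [b1 [h1 ->]]].
apply/forallP => E2; apply/implyP => /inME [a2 [b2 [h2 ->]]].
apply/implyP => ne; apply: disjP => x; rewrite !inE.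
case/orP=> /eqP ->; case/orP => //.
  move=> /eqP [E]; subst a2; move: ne; by rewrite h1 in h2; case: h2 => ->; rewrite eqxx.
move=> /eqP [E]; subst b2; move: ne; by rewrite (okp_inj Op h1 h2) eqxx.
Qed.

Lemma card_ME (p : {ffun 'I_j -> option 'I_k}) : #|ME p| = szp p.
Proof.
pose phi a : {set V} := if p a is Some b then [set inl a; inr b] else set0.
have -> : ME p = phi @: [set a | p a != None].
  apply/setP => E; apply/inME/imsetP => [[a [b [h ->]]]|[a]].
    by exists a; rewrite ?inE /phi h.
  rewrite inE /phi; case h: (p a) => [b|] // _ ->; by exists a, b.
rewrite card_in_imset //.
move=> a1 a2; rewrite !inE /phi; case h1: (p a1) => [b1|] //; case h2: (p a2) => [b2|] // _ _ E.
have : inl a1 \in [set inl a2; inr b2 : V] by rewrite -E !inE eqxx.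
by rewrite !inE => /orP [/eqP [->]|].
Qed.

Lemma ME_sub (p : {ffun 'I_j -> option 'I_k}) (p' : {ffun 'I_j -> option 'I_k}) a b : ME p = ME p' -> p a = Some b -> p' a = Some b.
Proof.
move=> E h.
have : [set inl a; inr b] \in ME p' by rewrite -E; apply/inME; exists a, b.
case/inME => a' [b' [h' E']].
by case: (set2_inv (lr_neq a b) E') => [[/inlI Ea /inrI Eb]|[/lrF []]]; rewrite -Ea -Eb.
Qed.

Lemma ME_inj (p : {ffun 'I_j -> option 'I_k}) (p' : {ffun 'I_j -> option 'I_k}) : ME p = ME p' -> p = p'.
Proof.
move=> E; apply/ffunP => a.
case h: (p a) => [b|]; first by rewrite (ME_sub E h).
case h': (p' a) => [b'|] //.
by rewrite (ME_sub (esym E) h') in h.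
Qed.

Lemma ME_surj M : is_matching ce M -> exists2 p, okp p & ME p = M.
Proof.
move=> Mm; pose pM : {ffun 'I_j -> option 'I_k} := [ffun a => [pick b | [set inl a; inr b] \in M]].
have pMP a b : pM a = Some b -> [set inl a; inr b] \in M.
  by rewrite ffunE; case: pickP => // b' h [<-].
have Op : okp pM.
  apply: okpP => [a a' b h h'|a b h].
    have := match_share (x := inr b) Mm (pMP _ _ h) (pMP _ _ h').
    rewrite !inE !eqxx !orbT => /(_ isT isT) E.
    by case: (set2_inv (lr_neq a b) E) => [[/inlI ->]|[/lrF []]].
  have := pMP _ _ h; case/andP: (Mm) => /forallP /(_ [set inl a; inr b]) /implyP H _ /H.
  case/edgeP => a' [b' [nB E]].
  by case: (set2_inv (lr_neq a b) E) => [[/inlI <- /inrI <-]|[/lrF []]].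
exists pM => //; apply/setP => E; apply/inME/idP => [[a [b [h ->]]]|EM].
  exact: pMP.
have := EM; case/andP: (Mm) => /forallP /(_ E) /implyP H _ /H.
case/edgeP => a [b [nB HE]]; exists a, b; split => //.
rewrite ffunE; case: pickP => [b' h|/(_ b)]; last by rewrite -HE EM.
have := match_share (x := inl a) Mm h EM; rewrite HE !inE !eqxx => /(_ isT isT) E'.
by case: (set2_inv (lr_neq a b') E') => [[_ /inrI ->]|[/lrF []]].
Qed.

Lemma nmatch_eq i : nmatch ce i = PI i.
Proof.
rewrite /nmatch /PI -(card_in_imset (f := ME)); last first.
  by move=> p p' _ _; apply: ME_inj.
apply: eq_card => M; rewrite inE; apply/idP/imsetP => [/andP [Mm /eqP <-]|[p]].
  case: (ME_surj Mm) => p Op <-; exists p => //; by rewrite inE Op card_ME eqxx.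
by rewrite inE => /andP [Op /eqP <-] ->; rewrite ME_matching // card_ME eqxx.
Qed.
End Comb.

Local Open Scope ring_scope.


Definition ff (m : nat) (x : int) : int := (falling m).[x].

Lemma ffE m x : ff m x = \prod_(i < m) (x - i%:R).
Proof. by rewrite /ff /falling horner_prod; apply: eq_bigr => i _; rewrite hornerXsubC. Qed.

Lemma ffSr m x : ff m.+1 x = ff m x * (x - m%:R).
Proof. by rewrite !ffE big_ord_recr. Qed.

Lemma ffS m x : ff m.+1 x = x * ff m (x - 1).
Proof.
rewrite !ffE big_ord_recl subr0; congr (_ * _); apply: eq_bigr => i _.
by rewrite lift0 -addn1 natrD opprD addrA addrAC.
Qed.

Lemma ff0 x : ff 0 x = 1. Proof. by rewrite ffE big_ord0. Qed.

Lemma ff_nat m (n : nat) : ff m n%:R = (n ^_ m)%:R.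
Proof.
elim: m => [|m IH]; first by rewrite ff0.
rewrite ffSr IH ffactnSr natrM; case: (leqP m n) => [le|lt]; first by rewrite natrB.
by rewrite ffact_small // !mul0r.
Qed.

Lemma ff_neg m y : (-1) ^+ m * ff m (- y) = ff m (y + m%:R - 1).
Proof.
elim: m y => [|m IH] y; first by rewrite !ff0 mul1r.
rewrite -natr1 addrA addrK [in RHS]ffS -IH [in LHS]ffSr exprS mulN1r -opprD mulrN mulrNN.
by rewrite mulrA mulrC.
Qed.

Lemma ff_vdm n x a :
  ff n (x + a) = \sum_(r < n.+1) 'C(n, r)%:R * ff (n - r) x * ff r a.
Proof.
elim: n => [|n IH]; first by rewrite big_ord1 !ff0 bin0 !mulr1.
have H2 : \sum_(r < n.+2) 'C(n.+1, r)%:R * ff (n.+1 - r) x * ff r a =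
   \sum_(r < n.+2) 'C(n, r)%:R * ff (n.+1 - r) x * ff r a +
   \sum_(r < n.+1) 'C(n, r)%:R * ff (n - r) x * ff r a * (a - r%:R).
  rewrite big_ord_recl [in RHS]big_ord_recl !bin0 -addrA; congr (_ + _).
  rewrite -big_split; apply: eq_bigr => i _.
  by rewrite lift0 subSS binS natrD ffSr !mulrDl !mulrA.
have H1 : \sum_(r < n.+2) 'C(n, r)%:R * ff (n.+1 - r) x * ff r a =
   \sum_(r < n.+1) 'C(n, r)%:R * ff (n - r) x * ff r a * (x - (n - r)%:R).
  rewrite big_ord_recr /= bin_small // mul0r mul0r addr0.
  apply: eq_bigr => i _; have hi : (i <= n)%N by rewrite -ltnS ltn_ord.
  by rewrite subSn // ffSr !mulrA mulrAC.
rewrite H2 H1 -big_split ffSr IH mulr_suml; apply: eq_bigr => i _ /=.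
have hi : (i <= n)%N by rewrite -ltnS ltn_ord.
rewrite -mulrDr; congr (_ * _).
by rewrite natrB // opprB addrACA (addrAC i%:R) subrr add0r addrAC.
Qed.

Lemma size_falling m : size (falling m) = m.+1.
Proof. by rewrite /falling size_prod_XsubC /index_enum unlock /= -enumT size_enum_ord. Qed.

Lemma monic_falling m : falling m \is monic.
Proof. exact: monic_prod_XsubC. Qed.

Definition Qp (c0 : int) (m : nat) : {poly int} := falling m \Po ('X - c0%:P).

Lemma size_Qp c0 m : size (Qp c0 m) = m.+1.
Proof. by rewrite /Qp size_comp_poly2 ?size_XsubC // size_falling. Qed.

Lemma lead_Qp c0 m : lead_coef (Qp c0 m) = 1.
Proof.
rewrite /Qp lead_coef_comp ?size_XsubC // lead_coefXsubC expr1n mulr1.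
exact/monicP/monic_falling.
Qed.

Lemma Qp_eval c0 m x : (Qp c0 m).[x] = ff m (x - c0).
Proof. by rewrite /Qp horner_comp hornerXsubC. Qed.

Lemma poly_ext (p q : {poly int}) : (forall n : nat, p.[n%:R] = q.[n%:R]) -> p = q.
Proof.
move=> H; apply/eqP; rewrite -subr_eq0; apply/negPn/negP => nz.
have := @max_poly_roots _ (p - q) [seq i%:R | i <- iota 0 (size (p - q))] nz.
rewrite size_map size_iota ltnn => H'; suff : false by [].
apply: H'.
  by apply/allP => y /mapP [i _ ->]; rewrite /root hornerD hornerN H subrr.
by rewrite map_inj_uniq ?iota_uniq // => i i' /eqP; rewrite eqr_nat => /eqP.
Qed.

Lemma indep N (e : nat -> int) (P : nat -> {poly int}) :
  (forall m, size (P m) = m.+1) -> (forall m, lead_coef (P m) = 1) ->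
  \sum_(m < N) e m *: P m = 0 -> forall m, (m < N)%N -> e m = 0.
Proof.
move=> Hs Hl; elim: N => [|N IH] // H m ltm.
move: H; rewrite big_ord_recr /= => H.
have eN : e N = 0.
  have := congr1 (fun p : {poly int} => p`_N) H.
  rewrite coef0 coefD coefZ coef_sum big1 ?add0r.
    have -> : (P N)`_N = 1 by rewrite -(Hl N) /lead_coef Hs.
    by rewrite mulr1.
  move=> i _; rewrite coefZ nth_default ?mulr0 // Hs; exact: ltn_ord.
have : (m <= N)%N by rewrite -ltnS.
rewrite leq_eqVlt => /orP [/eqP -> //|lt].
by apply: IH lt; rewrite -[RHS]H eN scale0r addr0.
Qed.

Lemma i1 (c x h : int) : c - x - h = - (x + h - c).
Proof. by rewrite opprB opprD addrA. Qed.
Lemma i2 (x h c g J L : int) : x + h - c + (J - L) - 1 = x - g + (g + h + J - c - L - 1).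
Proof. rewrite -!addrA addKr; do 2 congr (_ + _); exact: addrCA. Qed.

Definition aa (kG kH j : nat) (c : int) (l : nat) : int := (kG + kH + j)%:R - c - l%:R - 1.

Lemma L1 (kG kH j l : nat) (c x : int) : (l <= j)%N ->
  (-1) ^+ j * ff (j - l) (c - x - kH%:R) =
  (-1) ^+ l * \sum_(r < (j - l).+1)
     'C(j - l, r)%:R * ff (j - l - r) (x - kG%:R) * ff r (aa kG kH j c l).
Proof.
move=> hl; rewrite -ff_vdm.
have -> : (-1) ^+ j = (-1) ^+ l * (-1) ^+ (j - l) :> int by rewrite -exprD subnKC.
rewrite -mulrA; congr (_ * _).
by rewrite i1 ff_neg natrB // /aa !natrD (i2 _ _ _ kG%:R).
Qed.

Definition T (kG kH j : nat) (c : int) (mH : nat -> int) (i : nat) : int :=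
  \sum_(l < i.+1) (-1) ^+ l * mH l * ('C(j - l, j - i))%:R * ff (i - l) (aa kG kH j c l).

Lemma reindex (j l : nat) (G : nat -> int) : (l <= j)%N ->
  \sum_(i < j.+1 | (l < i.+1)%N) G i = \sum_(r < (j - l).+1) G (r + l)%N.
Proof.
move=> hl.
rewrite (eq_bigl (fun i : 'I_j.+1 => xpredT (i : nat) && (l <= i)%N)) //.
rewrite -(@big_geq_mkord _ _ _ l j.+1 xpredT).
rewrite (big_addn 0 _ l) big_mkord subSn //.
Qed.

Lemma K kG kH j c (mH : nat -> int) :
  (-1) ^+ j *: ((\sum_(l < j.+1) mH l *: Qp kH%:R (j - l)) \Po (c%:P - 'X)) =
  \sum_(i < j.+1) T kG kH j c mH i *: Qp kG%:R (j - i).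
Proof.
apply: poly_ext => n; set x : int := n%:R.
rewrite hornerZ horner_comp hornerD hornerN hornerC hornerX !horner_sum mulr_sumr.
under eq_bigr do rewrite hornerZ Qp_eval.
under [in RHS]eq_bigr do rewrite hornerZ Qp_eval /T mulr_suml.
rewrite [RHS](eq_bigr (fun i : 'I_j.+1 => \sum_(l < j.+1 | (l < i.+1)%N)
   (-1) ^+ l * mH l * ('C(j - l, j - i))%:R * ff (i - l) (aa kG kH j c l) * ff (j - i) (x - kG%:R))); last first.
  by move=> i _; rewrite (big_ord_widen j.+1 (fun l : nat => (-1) ^+ l * mH l * ('C(j - l, j - i))%:R * ff (i - l) (aa kG kH j c l) * ff (j - i) (x - kG%:R))) // ltnS -ltnS ltn_ord.
rewrite (exchange_big_dep xpredT) //=.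
apply: eq_bigr => l _.
have hl : (l <= j)%N by rewrite -ltnS ltn_ord.
rewrite mulrCA (L1 kG) // (@reindex j l (fun i : nat => (-1) ^+ l * mH l * 'C(j - l, j - i)%:R * ff (i - l) (aa kG kH j c l) * ff (j - i) (x - kG%:R))) //.
rewrite mulrCA mulrA mulr_sumr; apply: eq_bigr => r _.
have hr : (r <= j - l)%N by rewrite -ltnS ltn_ord.
have e1 : (j - (r + l) = j - l - r)%N by rewrite addnC subnDA.
by rewrite e1 addnK bin_sub // !mulrA mulrAC.
Qed.


Lemma ffact_split (n k m : nat) : (n ^_ k * (n - k) ^_ m = n ^_ (k + m))%N.
Proof.
case: (leqP k n) => [le|lt]; last first.
  by rewrite (ffact_small lt) mul0n ffact_small // (leq_trans lt) // leq_addr.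
elim: m => [|m IH]; first by rewrite addn0 muln1.
by rewrite addnS !ffactnSr mulnA IH subnDA.
Qed.

Lemma ff_split (n k m : nat) : (n ^_ k)%:R * ff m (n%:R - k%:R) = (n ^_ (k + m))%:R :> int.
Proof.
case: (leqP k n) => [le|lt]; last first.
  by rewrite (ffact_small lt) mul0r ffact_small // (leq_trans lt) // leq_addr.
by rewrite -natrB // ff_nat -natrM ffact_split.
Qed.

Lemma expand (j k : nat) (B : 'I_j -> 'I_k -> bool) (g : {poly int}) :
  is_chromatic_poly (biclique B) (falling k * g) ->
  g = \sum_(i < j.+1) (nmatch (compl_rel (biclique B)) i)%:R *: Qp k%:R (j - i).
Proof.
move=> hg; apply: (@mulfI _ (falling k)); first exact: monic_neq0 (monic_falling k).
apply: poly_ext => n; rewrite hg ncol_eq hornerM horner_sum -/(ff k n%:R) ff_nat mulr_sumr natr_sum.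
apply: eq_bigr => i _; rewrite hornerZ Qp_eval nmatch_eq natrM mulrCA ff_split.
have hi : (i <= j)%N by rewrite -ltnS ltn_ord.
by rewrite addnC -addnBA.
Qed.

Lemma rev_sum (j : nat) (F : nat -> {poly int}) :
  \sum_(i < j.+1) F i = \sum_(i < j.+1) F (j - i)%N.
Proof.
by rewrite -(big_mkord xpredT) big_rev_mkord subn0; apply: eq_bigr => i _; rewrite subSS.
Qed.

Unset Implicit Arguments.
Set Strict Implicit. Set Printing Implicit Defensive.

Theorem mainTheorem3 (j kG kH : nat) (hj : (0 < j)%N) (hjk : (j <= kG)%N) (hk : (kG <= kH)%N)
  (BG : 'I_j -> 'I_kG -> bool) (BH : 'I_j -> 'I_kH -> bool)
  (g h : {poly int})
  (hg : is_chromatic_poly (biclique BG) (falling kG * g))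
  (hh : is_chromatic_poly (biclique BH) (falling kH * h))
  (c : int) :
  g = (-1) ^+ j *: (h \Po (c%:P - 'X)) <->
  (forall i : nat, (i <= j)%N ->
     (nmatch (compl_rel (biclique BG)) i)%:R =
     \sum_(l < i.+1)
        (-1) ^+ l * (nmatch (compl_rel (biclique BH)) l)%:R
        * ('C(j - l, j - i))%:R
        * (falling (i - l)).[(kG + kH + j)%:R - c - (l : nat)%:R - 1]).
Proof.
set mG := fun i : nat => ((nmatch (compl_rel (biclique BG)) i)%:R : int).
set mH := fun i : nat => ((nmatch (compl_rel (biclique BH)) i)%:R : int).
change ((g = (-1) ^+ j *: (h \Po (c%:P - 'X))) <->
  (forall i : nat, (i <= j)%N -> mG i = T kG kH j c mH i)).
rewrite (expand hg) (expand hh) (K kG kH j c mH).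
split => [E i hi|H]; last first.
  by apply: eq_bigr => i _; congr (_ *: _); apply: H; rewrite -ltnS ltn_ord.
have E0 : \sum_(m < j.+1) (mG (j - m)%N - T kG kH j c mH (j - m)%N) *: Qp kG%:R m = 0.
  rewrite (rev_sum j (fun m => (mG (j - m)%N - T kG kH j c mH (j - m)%N) *: Qp kG%:R m)).
  rewrite -[RHS](subrr (\sum_(i < j.+1) mG i *: Qp kG%:R (j - i))).
  rewrite [in X in _ = _ - X]E -sumrB; apply: eq_bigr => m _.
  have hm : (m <= j)%N by rewrite -ltnS ltn_ord.
  by rewrite subKn // scalerBl.
have := @indep j.+1 (fun m => mG (j - m)%N - T kG kH j c mH (j - m)%N) _
  (@size_Qp _) (@lead_Qp _) E0 (j - i)%N.
rewrite ltnS leq_subr subKn // => /(_ isT)/eqP; rewrite subr_eq0 => /eqP.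
done.
Qed.
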